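(* Let $T$ be a rooted tree with $n$ vertices and root $r$, and let $X_n$ be the number of descents $\mathrm{des}(T,w)$ of a labeling $w$ of $T$ chosen uniformly at random among all $n!$ labelings. Then \[\mathbb{E}(X_n)=\frac{n-1}{2}\qquad\text{and}\qquad \mathrm{Var}(X_n)=\frac{2d_r+\sum_{v\in V(T)} d_v^2}{12},\] where $d_v$ denotes the down-degree of the vertex $v$.
   Context: A labeling of a rooted tree $T$ with $n$ vertices is a bijection $w: V(T)\to\{1,\dots,n\}$. A vertex $v$ with parent $u$ is a descent of $(T,w)$ if $w(v)>w(u)$ (the root is never a descent); $\mathrm{des}(T,w)$ is the number of descents. The down-degree of a vertex is its number of children. *)

(* Defs.v *)
From HB Require Import structures.
From mathcomp Require Import all_boot all_order all_algebra all_fingroup.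
Set Implicit Arguments. Unset Strict Implicit. Unset Printing Implicit Defensive.
Import GRing.Theory Num.Theory.

Definition is_rooted_tree (n : nat) (par : 'I_n -> 'I_n) (r : 'I_n) : Prop :=
  par r = r /\ forall v : 'I_n, exists k : nat, iter k par v = r.

(* A labeling is a bijection V(T) -> {0,...,n-1} (order-isomorphic to {1..n}),
   i.e. a permutation of 'I_n. *)
Definition des (n : nat) (par : 'I_n -> 'I_n) (r : 'I_n) (w : {perm 'I_n}) : nat :=
  #|[set v : 'I_n | (v != r) && (w (par v) < w v)]|.

Definition downdeg (n : nat) (par : 'I_n -> 'I_n) (r : 'I_n) (v : 'I_n) : nat :=
  #|[set u : 'I_n | (u != r) && (par u == v)]|.

Local Open Scope ring_scope.

Definition des_mean (n : nat) (par : 'I_n -> 'I_n) (r : 'I_n) : rat :=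
  (\sum_(w : {perm 'I_n}) (des par r w)%:R) / (n`!)%:R.

Definition des_var (n : nat) (par : 'I_n -> 'I_n) (r : 'I_n) : rat :=
  (\sum_(w : {perm 'I_n}) ((des par r w)%:R - des_mean par r) ^+ 2) / (n`!)%:R.

(* Main.v *)
Require Import Defs.
From HB Require Import structures.
From mathcomp Require Import all_boot all_order all_algebra all_fingroup.
From mathcomp Require Import zify ring lra.
Import GRing.Theory Num.Theory.
Local Open Scope ring_scope.

Definition J (x y : nat) : rat := ((x < y)%N%:R) - 1/2.

Lemma Jsym x y : x <> y -> J y x = - J x y.
Proof.
move=> nxy; rewrite /J; case E1: (x < y)%N; case E2: (y < x)%N;
try (exfalso; lia); rewrite /=; by field.
Qed.

Lemma Jsq x y : J x y * J x y = 1/4.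
Proof. rewrite /J; case: (x < y)%N => /=; by field. Qed.

Lemma J3 x y z : x <> y -> x <> z -> y <> z ->
  J x y * J x z + J y x * J y z + J z y * J z x = 1/4.
Proof.
move=> h1 h2 h3; rewrite /J.
case E1: (x < y)%N; case E2: (y < x)%N; case E3: (x < z)%N;
case E4: (z < x)%N; case E5: (y < z)%N; case E6: (z < y)%N;
try (exfalso; lia); rewrite /=; by field.
Qed.

Lemma sum_swap {n} (a b : 'I_n) (F : {perm 'I_n} -> rat) :
  \sum_w F w = \sum_w F (tperm a b * w)%g.
Proof. by rewrite (reindex_inj (mulgI (tperm a b))). Qed.

Lemma permx {n} (a b : 'I_n) (w : {perm 'I_n}) x :
  (tperm a b * w)%g x = w (tperm a b x).
Proof. by rewrite permM. Qed.

Lemma wneq {n} (w : {perm 'I_n}) a b : a != b -> (w a : nat) <> w b.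
Proof. by move=> /eqP nab /val_inj /perm_inj. Qed.

Lemma L2 {n} (a b : 'I_n) : a != b -> \sum_(w : {perm 'I_n}) J (w a) (w b) = 0.
Proof.
move=> nab.
have h : \sum_(w : {perm 'I_n}) J (w a) (w b) = \sum_(w : {perm 'I_n}) - J (w a) (w b).
  rewrite (sum_swap a b); apply: eq_bigr => w _.
  by rewrite !permx tpermL tpermR Jsym //; apply: wneq.
move: h; rewrite sumrN => h; lra.
Qed.

Lemma L4 {n} (a b c d : 'I_n) : a != b -> c != a -> c != b -> d != a -> d != b ->
  \sum_(w : {perm 'I_n}) J (w a) (w b) * J (w c) (w d) = 0.
Proof.
move=> nab ca cb da db.
have h : \sum_(w : {perm 'I_n}) J (w a) (w b) * J (w c) (w d) =
   \sum_(w : {perm 'I_n}) - (J (w a) (w b) * J (w c) (w d)).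
  rewrite (sum_swap a b); apply: eq_bigr => w _.
  have ac : a != c by rewrite eq_sym.
  have bc : b != c by rewrite eq_sym.
  have ad : a != d by rewrite eq_sym.
  have bd : b != d by rewrite eq_sym.
  rewrite !permx tpermL tpermR (tpermD ac bc) (tpermD ad bd) (@Jsym _ _ (wneq w a b nab)).
  by rewrite mulNr.
move: h; rewrite sumrN => h; lra.
Qed.

Lemma L3 {n} (a b c : 'I_n) : a != b -> a != c -> b != c ->
  \sum_(w : {perm 'I_n}) J (w a) (w b) * J (w a) (w c) = n`!%:R / 12.
Proof.
move=> ab ac bc.
have ca : c != a by rewrite eq_sym.
have cb : c != b by rewrite eq_sym.
have ba : b != a by rewrite eq_sym.
have h1 : \sum_(w : {perm 'I_n}) J (w a) (w b) * J (w a) (w c) =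
   \sum_(w : {perm 'I_n}) J (w b) (w a) * J (w b) (w c).
  rewrite (sum_swap a b); apply: eq_bigr => w _.
  by rewrite !permx tpermL tpermR (tpermD ac bc).
have h2 : \sum_(w : {perm 'I_n}) J (w a) (w b) * J (w a) (w c) =
   \sum_(w : {perm 'I_n}) J (w c) (w b) * J (w c) (w a).
  rewrite (sum_swap a c); apply: eq_bigr => w _.
  by rewrite !permx tpermL tpermR (tpermD ab cb).
have : 3 * \sum_(w : {perm 'I_n}) J (w a) (w b) * J (w a) (w c) = \sum_(w : {perm 'I_n}) (1/4 : rat).
  have -> : (3 : rat) = 1 + 1 + 1 by [].
  rewrite !mulrDl mul1r {3}h2 {2}h1.
  rewrite -!big_split /=; apply: eq_bigr => w _.
  by rewrite J3 //; apply: wneq.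
rewrite sumr_const card_Sn => h.
apply: (mulfI (x:=3)) => //. rewrite h -mulr_natr. by field.
Qed.

Section Tree.
Variables (n : nat) (par : 'I_n -> 'I_n) (r : 'I_n).
Hypothesis tree : is_rooted_tree par r.

Lemma T1 v : v != r -> par v != v.
Proof.
move=> vr; apply/eqP=> pv; case: tree => _ /(_ v) [k].
by rewrite iter_fix // => /eqP; rewrite (negbTE vr).
Qed.

Lemma T2 u : u != r -> par u != r -> par (par u) != u.
Proof.
move=> ur pur; apply/eqP=> ppu; case: tree => _ /(_ u) [k].
have : (iter k par u == u) || (iter k par u == par u).
  elim: k => [|k IH]; first by rewrite eqxx.
  rewrite iterS; case/orP: IH => /eqP ->; first by rewrite eqxx orbT.
  by rewrite ppu eqxx.
by case/orP=> /eqP -> E; [move: ur | move: pur]; rewrite E eqxx.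
Qed.

End Tree.

Lemma card_sum {n} (P Q : pred 'I_n) :
  (#|[set v | P v && Q v]|)%:R = \sum_(v | P v) ((Q v)%:R : rat).
Proof.
rewrite -sum1_card natr_sum big_mkcond [RHS]big_mkcond; apply: eq_bigr => v _.
by rewrite in_set; case: (P v); case: (Q v).
Qed.

Lemma sum_eq {n} (a b : 'I_n) :
  \sum_x ((a == x)%:R * (b == x)%:R : rat) = (a == b)%:R.
Proof.
rewrite (bigD1 a) //= eqxx mul1r big1 ?addr0 ?(eq_sym b) // => x /negbTE.
by rewrite eq_sym => ->; rewrite mul0r.
Qed.

Lemma cnt {n} (r : 'I_n) : \sum_(v : 'I_n | v != r) (1 : rat) = n%:R - 1.
Proof.
rewrite (_ : \sum_(v : 'I_n | v != r) (1 : rat) = (#|predC1 r|)%:R).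
  rewrite cardC1 card_ord; case: n r => [|m] r; first by case: r.
  by rewrite /= mulrSr addrK.
rewrite -sum1_card natr_sum; apply: eq_bigl => v; by rewrite inE.
Qed.

Lemma pair_sum {n} (par : 'I_n -> 'I_n) (r : 'I_n) u v :
  is_rooted_tree par r -> u != r -> v != r ->
  \sum_(w : {perm 'I_n}) J (w (par u)) (w u) * J (w (par v)) (w v) =
  n`!%:R * (((par u == par v)%:R + 2 * (u == v)%:R - (par u == v)%:R - (par v == u)%:R) / 12).
Proof.
move=> tree ur vr.
have pu := @T1 _ _ _ tree _ ur; have pv := @T1 _ _ _ tree _ vr.
case: (eqVneq u v) => [E|uv].
  subst v; under eq_bigr do rewrite Jsq.
  rewrite sumr_const card_Sn eqxx (negbTE pu) -mulr_natl /=; by field.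
case: (eqVneq (par u) (par v)) => [E|puv].
  rewrite -E L3 //; last by rewrite E.
  have puv : par u != v by rewrite E.
  rewrite (negbTE pu) (negbTE puv) /=; by field.
case: (eqVneq (par u) v) => [E|puv'].
  subst v.
  have h2 := @T2 _ _ _ tree _ ur vr.
  have -> : \sum_(w : {perm 'I_n}) J (w (par u)) (w u) * J (w (par (par u))) (w (par u)) =
     - \sum_(w : {perm 'I_n}) J (w (par u)) (w u) * J (w (par u)) (w (par (par u))).
    rewrite -sumrN; apply: eq_bigr => w _.
    rewrite (@Jsym (w (par u)) (w (par (par u)))) ?mulrN //.
    by apply: wneq; rewrite eq_sym.
  rewrite L3 //; last by rewrite eq_sym.
  rewrite ?(negbTE puv) ?(negbTE uv) ?eqxx ?(negbTE h2) /=; by field.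
case: (eqVneq (par v) u) => [E|pvu].
  subst u.
  have h2 := @T2 _ _ _ tree _ vr ur.
  have -> : \sum_(w : {perm 'I_n}) J (w (par (par v))) (w (par v)) * J (w (par v)) (w v) =
     - \sum_(w : {perm 'I_n}) J (w (par v)) (w (par (par v))) * J (w (par v)) (w v).
    rewrite -sumrN; apply: eq_bigr => w _.
    rewrite (@Jsym (w (par v)) (w (par (par v)))) ?mulNr //.
    by apply: wneq; rewrite eq_sym.
  rewrite L3 //; last by rewrite eq_sym.
  rewrite ?(negbTE puv) ?(negbTE uv) ?eqxx ?(negbTE puv') ?(negbTE h2) /=; by field.
rewrite L4 //; last by rewrite eq_sym.
  rewrite ?(negbTE puv) ?(negbTE uv) ?(negbTE puv') ?(negbTE pvu) /=; by field.
all: by rewrite eq_sym.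
Qed.

Lemma dE {n} (par : 'I_n -> 'I_n) (r x : 'I_n) :
  (downdeg par r x)%:R = \sum_(u | u != r) ((par u == x)%:R : rat).
Proof. by rewrite /downdeg card_sum. Qed.

Lemma comb {n} (par : 'I_n -> 'I_n) (r : 'I_n) :
  \sum_(u | u != r) \sum_(v | v != r)
    ((par u == par v)%:R + 2 * (u == v)%:R - (par u == v)%:R - (par v == u)%:R : rat)
  = 2 * (downdeg par r r)%:R + \sum_(x : 'I_n) ((downdeg par r x)%:R) ^+ 2.
Proof.
have S1 : \sum_(u | u != r) \sum_(v | v != r) ((par u == par v)%:R : rat)
          = \sum_(x : 'I_n) ((downdeg par r x)%:R) ^+ 2.
  under [RHS]eq_bigr => x _ do rewrite dE expr2 mulr_suml.
  under [RHS]eq_bigr => x _ do under eq_bigr => u _ do rewrite mulr_sumr.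
  rewrite [RHS]exchange_big /=; apply: eq_bigr => u _.
  rewrite [RHS]exchange_big /=; apply: eq_bigr => v _.
  by rewrite sum_eq.
have S2 : \sum_(u | u != r) \sum_(v | v != r) ((u == v)%:R : rat) = n%:R - 1.
  rewrite -(cnt r); apply: eq_bigr => u ur.
  rewrite (bigD1 u) //= eqxx big1 ?addr0 // => v /andP[_ /negbTE].
  by rewrite eq_sym => ->.
have S3 : \sum_(u | u != r) \sum_(v | v != r) ((par u == v)%:R : rat)
          = n%:R - 1 - (downdeg par r r)%:R.
  rewrite dE -(cnt r) -sumrB; apply: eq_bigr => u ur.
  case: (eqVneq (par u) r) => [E|E].
    rewrite big1 ?subrr // => v vr; rewrite E.
    by rewrite eq_sym (negbTE vr).
  rewrite (bigD1 (par u)) //= eqxx big1 ?addr0 ?subr0 // => v /andP[_ /negbTE].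
  by rewrite eq_sym => ->.
have S4 : \sum_(u | u != r) \sum_(v | v != r) ((par v == u)%:R : rat)
          = n%:R - 1 - (downdeg par r r)%:R.
  by rewrite exchange_big.
under eq_bigr => u _ do rewrite !sumrB big_split /= -mulr_sumr.
rewrite !sumrB big_split /= -mulr_sumr S1 S2 S3 S4.
ring.
Qed.

Theorem lemma3p3 (n : nat) (par : 'I_n -> 'I_n) (r : 'I_n) :
  is_rooted_tree par r ->
  des_mean par r = ((n%:R - 1) / 2 : rat) /\
  des_var par r =
    ((2 * (downdeg par r r)%:R
      + \sum_(v : 'I_n) ((downdeg par r v)%:R) ^+ 2) / 12 : rat).
Proof.
move=> tree.
have nf : (n`!%:R : rat) != 0 by rewrite pnatr_eq0 -lt0n fact_gt0.
pose E (w : {perm 'I_n}) := \sum_(v | v != r) J (w (par v)) (w v).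
have desE w : (des par r w)%:R = E w + (n%:R - 1) / 2.
  rewrite /des card_sum /E -(cnt r) mulr_suml -big_split /=; apply: eq_bigr => v _.
  by rewrite /J mul1r subrK.
have hm : des_mean par r = (n%:R - 1) / 2.
  rewrite /des_mean; under eq_bigr do rewrite desE.
  rewrite big_split /= sumr_const card_Sn /E exchange_big /=.
  rewrite big1; last by move=> v vr; apply: L2; exact: (@T1 _ _ _ tree _ vr).
  rewrite add0r -mulr_natl; by field.
split => //.
rewrite /des_var hm.
under eq_bigr do rewrite desE addrK expr2 /E mulr_suml.
under eq_bigr do under eq_bigr do rewrite mulr_sumr.
rewrite exchange_big /=.
under eq_bigr do rewrite exchange_big /=.
under eq_bigr => u ur do under eq_bigr => v vr do rewrite (pair_sum _ _ _ _ tree ur vr).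
under eq_bigr do rewrite -mulr_sumr -mulr_suml.
rewrite -mulr_sumr -mulr_suml comb.
by field.
Qed.
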